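(* Let $r\geqslant 3$ be an odd integer and let $\Gamma\cong\mathbb{Z}_{4r}\oplus\mathbb{Z}_4$. Then there exists an $\mathrm{MRS}_\Gamma(r,8;2)$ in which every row sum and every column sum equals $0_\Gamma$.
   Context: For an abelian group $\Gamma$ of order $abc$, an $\mathrm{MRS}_\Gamma(a,b;c)$ is a collection of $c$ arrays of size $a\times b$ whose entries are the elements of $\Gamma$, each appearing exactly once and in a unique array, such that there are $\omega,\delta\in\Gamma$ with every row sum (in every array) equal to $\omega$ and every column sum (in every array) equal to $\delta$. *)

(* Defs.v *)
From HB Require Import structures.
From mathcomp Require Import all_boot all_order all_algebra.
Set Implicit Arguments. Unset Strict Implicit. Unset Printing Implicit Defensive.
Import GRing.Theory.
Local Open Scope ring_scope.

Definition is_MRS (G : zmodType) (a b c : nat) (A : 'I_c -> 'M[G]_(a, b))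
    (omega delta : G) : Prop :=
  [/\ bijective (fun t : 'I_c * 'I_a * 'I_b => A t.1.1 t.1.2 t.2),
      (forall (k : 'I_c) (i : 'I_a), \sum_(j < b) A k i j = omega) &
      (forall (k : 'I_c) (j : 'I_b), \sum_(i < a) A k i j = delta)].

(* Main.v *)
Require Import Defs.
From HB Require Import structures.
From mathcomp Require Import all_boot all_order all_algebra.
From mathcomp Require Import zify ring.
Set Implicit Arguments. Unset Strict Implicit. Unset Printing Implicit Defensive.
Import GRing.Theory.
Local Open Scope ring_scope.

Definition ptbl : seq (seq (seq nat)) :=
  [:: [:: [::0;1;2]; [::0;2;1]; [::0;1;2]; [::0;2;1]; [::1;0;2]; [::2;0;1]; [::1;2;0]; [::2;1;0]];
      [:: [::0;1;2]; [::0;1;2]; [::0;2;1]; [::2;1;0]; [::1;0;2]; [::1;2;0]; [::2;0;1]; [::0;2;1]]].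
Definition pe (k i j : nat) : nat := nth 0%N (nth [::] (nth [::] ptbl k) j) i.
Definition sig (h : nat * nat) : nat * nat := (h.2, ((8 - h.1 - h.2) %% 4)%N).
Definition hA (k j : nat) : nat := (2 * k + j %/ 4)%N.
Definition hB (j : nat) : nat := (j %% 4)%N.
Definition tH (k i j : nat) : nat * nat := iter (pe k i j) sig (hA k j, hB j).
Definition tU (k i j : nat) : int :=
  match pe k i j with 0%N => 0 | 1%N => 1 | _ => -1 end.
Definition sgnz (b : bool) : int := if b then -1 else 1.
Definition DU (k i j : nat) : int :=
  if (i < 3)%N then tU k i j else sgnz (odd j) * (sgnz (~~ odd i) * ((i + 1) %/ 2)%N%:Z).
Definition DA (k i j : nat) : int :=
  if (i < 3)%N then ((tH k i j).1)%:Z else sgnz (~~ odd i) * (hA k j)%:Z.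
Definition DB (k i j : nat) : int :=
  if (i < 3)%N then ((tH k i j).2)%:Z else sgnz (~~ odd i) * (hB j)%:Z.

Definition bnd (n : nat) (P : nat -> bool) := all P (iota 0 n).
Lemma bndP n P : bnd n P -> forall i, (i < n)%N -> P i.
Proof. by move=> /allP H i hi; apply: H; rewrite mem_iota. Qed.

Definition sumz (s : seq nat) (F : nat -> int) : int := foldr (fun j acc => F j + acc) 0 s.
Lemma big_sumz s F : \sum_(j <- s) F j = sumz s F.
Proof. by elim: s => [|x s IH]; rewrite ?big_nil ?big_cons ?IH. Qed.
Definition chk_row : bool :=
  bnd 2 (fun k => bnd 3 (fun i =>
    [&& sumz (iota 0 8) (fun j => DU k i j) == 0,
        (4 %| sumz (iota 0 8) (fun j => DA k i j))%Z &
        (4 %| sumz (iota 0 8) (fun j => DB k i j))%Z])).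
Lemma chk_row_ok : chk_row. Proof. by vm_compute. Qed.
Definition chk_col : bool :=
  bnd 2 (fun k => bnd 8 (fun j =>
    [&& sumz (iota 0 3) (fun i => DU k i j) == 0,
        (4 %| sumz (iota 0 3) (fun i => DA k i j))%Z &
        (4 %| sumz (iota 0 3) (fun i => DB k i j))%Z])).
Lemma chk_col_ok : chk_col. Proof. by vm_compute. Qed.
Definition chk_inj3 : bool :=
  bnd 2 (fun k => bnd 3 (fun i => bnd 8 (fun j =>
  bnd 2 (fun k' => bnd 3 (fun i' => bnd 8 (fun j' =>
    [&& DU k i j == DU k' i' j', (4 %| DA k i j - DA k' i' j')%Z &
        (4 %| DB k i j - DB k' i' j')%Z] ==> [&& k == k', i == i' & j == j'])))))).
Lemma chk_inj3_ok : chk_inj3. Proof. by vm_compute. Qed.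
Definition chk_small : bool :=
  bnd 2 (fun k => bnd 3 (fun i => bnd 8 (fun j => (-1 <= DU k i j <= 1)%R))).
Lemma chk_small_ok : chk_small. Proof. by vm_compute. Qed.
Definition HA (k j : nat) (p : bool) : int := sgnz p * (hA k j)%:Z.
Definition HB (j : nat) (p : bool) : int := sgnz p * (hB j)%:Z.
Definition chk_injH : bool :=
  bnd 2 (fun k => bnd 8 (fun j => all (fun p =>
  bnd 2 (fun k' => bnd 8 (fun j' => all (fun p' =>
    [&& (odd j (+) p) == (odd j' (+) p'), (4 %| HA k j p - HA k' j' p')%Z &
        (4 %| HB j p - HB j' p')%Z] ==> [&& k == k', j == j' & p == p'])
   [:: true; false]))) [:: true; false])).
Lemma chk_injH_ok : chk_injH. Proof. by vm_compute. Qed.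
Lemma intr_Zp n (z : int) : (1 < n)%N -> (z%:~R : 'Z_n) = 0 -> (n%:Z %| z)%Z.
Proof.
move=> n1; case: z => m.
  rewrite -pmulrn => /(congr1 (@nat_of_ord _)); rewrite val_Zp_nat // => h.
  by rewrite /dvdz /=; apply/eqP.
rewrite NegzE mulrNz => /eqP; rewrite oppr_eq0 -pmulrn => /eqP /(congr1 (@nat_of_ord _)); rewrite val_Zp_nat // => h.
by rewrite /dvdz /=; apply/eqP.
Qed.

Lemma Zp_intr n (z : int) : (1 < n)%N -> (n%:Z %| z)%Z -> (z%:~R : 'Z_n) = 0.
Proof.
move=> n1 /dvdzP [q ->]; rewrite intrM -[(n%:Z)%:~R]pmulrn.
by rewrite pchar_Zp // mulr0.
Qed.

Lemma zeroE (r : nat) (T : finType) (U A B : T -> int) : (0 < r)%N ->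
  \sum_(x : T) U x = 0 -> (4 %| \sum_(x : T) A x)%Z -> (4 %| \sum_(x : T) B x)%Z ->
  \sum_(x : T) ((((4 * U x + r%:Z * A x)%:~R : 'Z_(4 * r)), ((B x)%:~R : 'Z_4))
     : ('Z_(4 * r) * 'Z_4)%type) = 0.
Proof.
move=> r0 hU hA hB.
have e1 := big_morph (@fst 'Z_(4 * r) 'Z_4) (id1 := 0) (op1 := +%R) (op2 := +%R) (id2 := 0) (fun _ _ => erefl) erefl.
have e2 := big_morph (@snd 'Z_(4 * r) 'Z_4) (id1 := 0) (op1 := +%R) (op2 := +%R) (id2 := 0) (fun _ _ => erefl) erefl.
rewrite [LHS]surjective_pairing; change (0 : ('Z_(4 * r) * 'Z_4)%type) with ((0 : 'Z_(4 * r)), (0 : 'Z_4)); congr (_, _).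
  rewrite e1 /= -(big_morph _ (@intrD _) (mulr0z 1)) big_split /= -!mulr_sumr hU mulr0 add0r.
  apply: Zp_intr; first by lia.
  case/dvdzP: hA => q ->.
  by apply/dvdzP; exists q; rewrite PoszM; ring.
rewrite e2 /= -(big_morph _ (@intrD _) (mulr0z 1)).
by apply: Zp_intr.
Qed.

Lemma colsum (V : nat -> int) n : (forall t, V (2 * t + 3)%N + V (2 * t + 4)%N = 0) ->
  \sum_(i < (2 * n + 3)%N) V i = \sum_(i < 3) V i.
Proof.
move=> hV; elim: n => [|n IH] //.
rewrite -!(big_mkord xpredT V) in IH *.
have -> : (2 * n.+1 + 3 = (2 * n + 3).+1.+1)%N by lia.
rewrite [LHS]big_nat_recr //= [in LHS]big_nat_recr //= -addrA IH.
have -> : (2 * n + 3).+1 = (2 * n + 4)%N by lia.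
by rewrite hV addr0. Qed.

Lemma s8 (F : nat -> int) : \sum_(j < 8) F j = sumz (iota 0 8) F.
Proof. by rewrite -(big_mkord xpredT F) /index_iota subn0 big_sumz. Qed.
Lemma s3 (F : nat -> int) : \sum_(j < 3) F j = sumz (iota 0 3) F.
Proof. by rewrite -(big_mkord xpredT F) /index_iota subn0 big_sumz. Qed.

Lemma rowU k i : (k < 2)%N -> \sum_(j < 8) DU k i j = 0.
Proof.
move=> hk; case: (ltnP i 3) => hi.
  by have /and3P [/eqP h _ _] := bndP (bndP chk_row_ok hk) hi; rewrite s8.
rewrite (eq_bigr (fun j : 'I_8 => sgnz (odd j) * (sgnz (~~ odd i) * ((i + 1) %/ 2)%N%:Z))); last first.
  by move=> j _; rewrite /DU ifN // -leqNgt.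
by rewrite -mulr_suml (s8 (fun j => sgnz (odd j))) mul0r.
Qed.

Lemma rowA k i : (k < 2)%N -> (4 %| \sum_(j < 8) DA k i j)%Z.
Proof.
move=> hk; case: (ltnP i 3) => hi.
  by have /and3P [_ h _] := bndP (bndP chk_row_ok hk) hi; rewrite s8.
rewrite (eq_bigr (fun j : 'I_8 => sgnz (~~ odd i) * (hA k j)%:Z)); last first.
  by move=> j _; rewrite /DA ifN // -leqNgt.
rewrite -mulr_sumr; apply: dvdz_mull; rewrite (s8 (fun j => (hA k j)%:Z)).
by case: k hk => [|[|]].
Qed.

Lemma rowB k i : (k < 2)%N -> (4 %| \sum_(j < 8) DB k i j)%Z.
Proof.
move=> hk; case: (ltnP i 3) => hi.
  by have /and3P [_ _ h] := bndP (bndP chk_row_ok hk) hi; rewrite s8.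
rewrite (eq_bigr (fun j : 'I_8 => sgnz (~~ odd i) * (hB j)%:Z)); last first.
  by move=> j _; rewrite /DB ifN // -leqNgt.
by rewrite -mulr_sumr; apply: dvdz_mull; rewrite (s8 (fun j => (hB j)%:Z)).
Qed.

Lemma pairfacts t : [/\ (2 * t + 3 < 3)%N = false, (2 * t + 4 < 3)%N = false,
  odd (2 * t + 3) = true, odd (2 * t + 4) = false &
  ((2 * t + 3 + 1) %/ 2 = (2 * t + 4 + 1) %/ 2)%N].
Proof.
split; lia.
Qed.

Lemma colU k j n : (k < 2)%N -> (j < 8)%N -> \sum_(i < (2 * n + 3)%N) DU k i j = 0.
Proof.
move=> hk hj; rewrite (colsum (V := fun i => DU k i j)).
  by have /and3P [/eqP h _ _] := bndP (bndP chk_col_ok hk) hj; rewrite (s3 (fun i => _ k i j)).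
move=> t; case: (pairfacts t) => h1 h2 h3 h4 h5.
rewrite /DU h1 h2 h3 h4 h5 /sgnz /=; ring.
Qed.

Lemma colA k j n : (k < 2)%N -> (j < 8)%N -> (4 %| \sum_(i < (2 * n + 3)%N) DA k i j)%Z.
Proof.
move=> hk hj; rewrite (colsum (V := fun i => DA k i j)).
  by have /and3P [_ h _] := bndP (bndP chk_col_ok hk) hj; rewrite (s3 (fun i => _ k i j)).
move=> t; case: (pairfacts t) => h1 h2 h3 h4 h5.
rewrite /DA h1 h2 h3 h4 /sgnz /=; ring.
Qed.

Lemma colB k j n : (k < 2)%N -> (j < 8)%N -> (4 %| \sum_(i < (2 * n + 3)%N) DB k i j)%Z.
Proof.
move=> hk hj; rewrite (colsum (V := fun i => DB k i j)).
  by have /and3P [_ _ h] := bndP (bndP chk_col_ok hk) hj; rewrite (s3 (fun i => _ k i j)).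
move=> t; case: (pairfacts t) => h1 h2 h3 h4 h5.
rewrite /DB h1 h2 h3 h4 /sgnz /=; ring.
Qed.

Lemma boundU n k i j : (k < 2)%N -> (j < 8)%N -> (i < 2 * n + 3)%N ->
  (- (n + 1)%N%:Z <= DU k i j) /\ (DU k i j <= (n + 1)%N%:Z).
Proof.
move=> hk hj hi; case: (ltnP i 3) => h3.
  have /andP [h1 h2] := bndP (bndP (bndP chk_small_ok hk) h3) hj.
  split; lia.
rewrite /DU ifN -?leqNgt //.
have : ((i + 1) %/ 2 <= n + 1)%N by lia.
case: (odd j); case: (odd i); rewrite /sgnz /=; lia.
Qed.

Lemma bigU k i j : (3 <= i)%N -> (DU k i j <= -2) \/ (2 <= DU k i j).
Proof.
move=> h3; rewrite /DU ifN -?leqNgt //.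
have : (2 <= (i + 1) %/ 2)%N by lia.
case: (odd j); case: (odd i); rewrite /sgnz /=; lia.
Qed.

Lemma coprime4 n : coprimez 4 (2 * n + 3)%N%:Z.
Proof.
rewrite coprimezE /= (_ : (1 + (1 + (1 + 1)))%N = 2 ^ 2)%N // coprime_pexpl // coprime2n.
by rewrite oddD oddM.
Qed.

Lemma key n k i j k' i' j' : (k < 2)%N -> (k' < 2)%N -> (i < 2 * n + 3)%N ->
  (i' < 2 * n + 3)%N -> (j < 8)%N -> (j' < 8)%N ->
  ((4 * (2 * n + 3))%N%:Z %| (4 * DU k i j + (2 * n + 3)%N%:Z * DA k i j)
       - (4 * DU k' i' j' + (2 * n + 3)%N%:Z * DA k' i' j'))%Z ->
  (4 %| DB k i j - DB k' i' j')%Z -> [/\ k = k', i = i' & j = j'].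
Proof.
move=> hk hk' hi hi' hj hj' hX hB.
have hA : (4 %| DA k i j - DA k' i' j')%Z.
  rewrite -(Gauss_dvdzl _ (coprime4 n)).
  case/dvdzP: hX => q hq; apply/dvdzP; exists ((2 * n + 3)%N%:Z * q - (DU k i j - DU k' i' j')).
  move: hq; rewrite ?PoszM ?PoszD; nia.
have hU : DU k i j = DU k' i' j'.
  case/dvdzP: hX => q hq; case/dvdzP: hA => w hw.
  have [b1 b2] := boundU hk hj hi; have [b1' b2'] := boundU hk' hj' hi'.
  have e : DU k i j - DU k' i' j' = (2 * n + 3)%N%:Z * (q - w).
    move: hq hw; rewrite ?PoszM ?PoszD; nia.
  move: e b1 b2 b1' b2'; rewrite ?PoszD ?PoszM; move: (q - w) => m e b1 b2 b1' b2'.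
  have : (m <= 0) && (0 <= m) by apply/andP; split; nia.
  move=> hm; have hm0 : m = 0 by lia.
  move: e; rewrite hm0 mulr0; lia.
case: (ltnP i 3) => h3; case: (ltnP i' 3) => h3'.
- have := bndP (bndP (bndP (bndP (bndP (bndP chk_inj3_ok hk) h3) hj) hk') h3') hj'.
  rewrite hU eqxx hA hB /= => /and3P [/eqP -> /eqP -> /eqP ->] //.
- have /andP [h1 h2] := bndP (bndP (bndP chk_small_ok hk) h3) hj.
  have := bigU k' j' h3'; lia.
- have /andP [h1 h2] := bndP (bndP (bndP chk_small_ok hk') h3') hj'.
  have := bigU k j h3; lia.
have hXi : (2 <= (i + 1) %/ 2)%N by lia.
have hXi' : (2 <= (i' + 1) %/ 2)%N by lia.
have [hXX hs] : ((i + 1) %/ 2 = (i' + 1) %/ 2)%N /\ (odd j (+) ~~ odd i) = (odd j' (+) ~~ odd i').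
  move: hU hXi hXi'; rewrite /DU !ifN -?leqNgt //.
  case: (odd j); case: (odd i); case: (odd j'); case: (odd i'); rewrite /sgnz /=; lia.
move: hA hB; rewrite /DA /DB !ifN -?leqNgt // => hA hB.
have := bndP (bndP chk_injH_ok hk) hj.
move=> /allP /(_ (~~ odd i)) H; have {H} := H (ltac:(by case: (odd i))).
move=> /(bndP) /(_ _ hk') /(bndP) /(_ _ hj') /allP /(_ (~~ odd i')) H.
have {H} := H (ltac:(by case: (odd i'))).
rewrite /HA /HB hs eqxx hA hB /= => /and3P [/eqP e1 /eqP e2 /eqP e3].
split => //; lia.
Qed.

Unset Implicit Arguments.
Theorem lemma4p7 (r : nat) (hr3 : (3 <= r)%N) (hrodd : odd r) :
  exists A : 'I_2 -> 'M[('Z_(4 * r) * 'Z_4)%type]_(r, 8),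
    is_MRS A 0 0.
Proof.
have [n hn] : exists n, r = (2 * n + 3)%N by exists ((r - 3) %/ 2)%N; lia.
subst r.
have h1 : (1 < 4 * (2 * n + 3))%N by lia.
have h0 : (0 < 2 * n + 3)%N by lia.
exists (fun k => \matrix_(i < 2 * n + 3, j < 8)
  ((((4 * DU k i j + (2 * n + 3)%N%:Z * DA k i j)%:~R : 'Z_(4 * (2 * n + 3))),
    ((DB k i j)%:~R : 'Z_4)) : ('Z_(4 * (2 * n + 3)) * 'Z_4)%type)).
split.
- apply: inj_card_bij.
    move=> [[k i] j] [[k' i'] j']; rewrite /= !mxE => [[e1 e2]].
    move/eqP: e1; rewrite -subr_eq0 -intrB => /eqP /(intr_Zp h1) e1.
    move/eqP: e2; rewrite -subr_eq0 -intrB => /eqP /(@intr_Zp 4 _ erefl) e2.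
    have [] := key (ltn_ord k) (ltn_ord k') (ltn_ord i) (ltn_ord i') (ltn_ord j) (ltn_ord j') e1 e2.
    by move=> /val_inj -> /val_inj -> /val_inj ->.
  rewrite !card_prod !card_ord Zp_cast // (_ : (Zp_trunc 4).+2 = 4)%N //; lia.
- move=> k i.
  under eq_bigr do rewrite mxE.
  apply: (zeroE (U := fun j : 'I_8 => DU k i j) (A := fun j : 'I_8 => DA k i j)
                (B := fun j : 'I_8 => DB k i j)) => //.
  + exact: rowU (ltn_ord k).
  + exact: rowA (ltn_ord k).
  + exact: rowB (ltn_ord k).
- move=> k j.
  under eq_bigr do rewrite mxE.
  apply: (zeroE (U := fun i : 'I_(2 * n + 3) => DU k i j) (A := fun i : 'I_(2 * n + 3) => DA k i j)
                (B := fun i : 'I_(2 * n + 3) => DB k i j)) => //.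
  + exact: colU (ltn_ord k) (ltn_ord j).
  + exact: colA (ltn_ord k) (ltn_ord j).
  + exact: colB (ltn_ord k) (ltn_ord j).
Qed.
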